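(* Let $\Omega\subseteq\mathbb{R}^3$ be a domain. If $b\colon\Omega\to\mathbb{R}$ is a real-valued biharmonic function (i.e. $\Delta_3^2 b=0$), then $\partial b\,\partial$ is inframonogenic and $\overline{\partial}\, b\,\overline{\partial}$ is antiinframonogenic. If $f=f_0+f_1e_1+f_2e_2\colon\Omega\to\mathbb{R}^3$ is inframonogenic or antiinframonogenic, then every component $f_i$ ($i=0,1,2$) of $f$ is biharmonic.
   Context: $\mathbb{H}$ denotes the real quaternions with basis $e_0=1,e_1,e_2,e_3$ and $e_1^2=e_2^2=e_3^2=e_1e_2e_3=-1$. $\mathbb{R}^3$ is identified with the reduced quaternions $x=x_0+x_1e_1+x_2e_2$. Write $\partial_i=\partial/\partial x_i$ and $\Delta_3=\partial_0^2+\partial_1^2+\partial_2^2$. For a (sufficiently differentiable) $\mathbb{H}$-valued function $f$, the left operators are $\overline{\partial} f=\partial_0 f+e_1\partial_1 f+e_2\partial_2 f$ and $\partial f=\partial_0 f-e_1\partial_1 f-e_2\partial_2 f$, and the right operators are $f\overline{\partial}=\partial_0 f+(\partial_1 f)e_1+(\partial_2 f)e_2$ and $f\partial=\partial_0 f-(\partial_1 f)e_1-(\partial_2 f)e_2$. The two-sided operators are $\overline{\partial} f\overline{\partial}:=\overline{\partial}(f\overline{\partial})=(\overline{\partial}f)\overline{\partial}$ and similarly $\partial f\partial$. A function $f$ is inframonogenic if $\overline{\partial} f\overline{\partial}=0$ and antiinframonogenic if $\partial f\partial=0$. A real function is biharmonic if $\Delta_3^2$ of it vanishes. *)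

(* Defs.v *)
From Stdlib Require Import Reals Lra List.
From Coquelicot Require Import Coquelicot.
Open Scope R_scope.

(** * Real quaternions H with basis 1, e1, e2, e3 and
      e1^2 = e2^2 = e3^2 = e1 e2 e3 = -1  (so e1 e2 = e3, e2 e3 = e1, e3 e1 = e2). *)
Record quat := mkQ { q0 : R; q1 : R; q2 : R; q3 : R }.

Definition qadd (a b : quat) : quat :=
  mkQ (q0 a + q0 b) (q1 a + q1 b) (q2 a + q2 b) (q3 a + q3 b).
Definition qopp (a : quat) : quat := mkQ (- q0 a) (- q1 a) (- q2 a) (- q3 a).
Definition qsub (a b : quat) : quat := qadd a (qopp b).
Definition qmul (a b : quat) : quat :=
  mkQ (q0 a * q0 b - q1 a * q1 b - q2 a * q2 b - q3 a * q3 b)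
      (q0 a * q1 b + q1 a * q0 b + q2 a * q3 b - q3 a * q2 b)
      (q0 a * q2 b - q1 a * q3 b + q2 a * q0 b + q3 a * q1 b)
      (q0 a * q3 b + q1 a * q2 b - q2 a * q1 b + q3 a * q0 b).
Definition qzero : quat := mkQ 0 0 0 0.
Definition e1 : quat := mkQ 0 1 0 0.
Definition e2 : quat := mkQ 0 0 1 0.
Definition e3 : quat := mkQ 0 0 0 1.
Definition qreal (r : R) : quat := mkQ r 0 0 0.

(** * Functions on R^3 (points x = x0 + x1 e1 + x2 e2, written as three reals) *)
Definition rfun := R -> R -> R -> R.
Definition hfun := R -> R -> R -> quat.
Definition region := R -> R -> R -> Prop.

Inductive idx := I0 | I1 | I2.

Definition pd (i : idx) (g : rfun) : rfun :=
  match i with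
  | I0 => fun x0 x1 x2 => Derive (fun t => g t x1 x2) x0
  | I1 => fun x0 x1 x2 => Derive (fun t => g x0 t x2) x1
  | I2 => fun x0 x1 x2 => Derive (fun t => g x0 x1 t) x2
  end.

Definition ex_pd (i : idx) (g : rfun) (x0 x1 x2 : R) : Prop :=
  match i with
  | I0 => ex_derive (fun t => g t x1 x2) x0
  | I1 => ex_derive (fun t => g x0 t x2) x1
  | I2 => ex_derive (fun t => g x0 x1 t) x2
  end.

Fixpoint pds (l : list idx) (g : rfun) : rfun :=
  match l with
  | nil => g
  | i :: l' => pd i (pds l' g)
  end.

Definition cont3 (g : rfun) (x0 x1 x2 : R) : Prop :=
  forall eps : R, 0 < eps -> exists delta : R, 0 < delta /\
    forall y0 y1 y2 : R, Rabs (y0 - x0) < delta -> Rabs (y1 - x1) < delta ->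
      Rabs (y2 - x2) < delta -> Rabs (g y0 y1 y2 - g x0 x1 x2) < eps.

Definition Ck (k : nat) (Om : region) (g : rfun) : Prop :=
  forall l : list idx,
    (length l <= k)%nat ->
    (forall x0 x1 x2, Om x0 x1 x2 -> cont3 (pds l g) x0 x1 x2) /\
    ((length l < k)%nat ->
       forall i x0 x1 x2, Om x0 x1 x2 -> ex_pd i (pds l g) x0 x1 x2).

Definition open3 (U : region) : Prop :=
  forall x0 x1 x2, U x0 x1 x2 -> exists r : R, 0 < r /\
    forall y0 y1 y2, (y0 - x0)^2 + (y1 - x1)^2 + (y2 - x2)^2 < r^2 -> U y0 y1 y2.

Definition domain3 (Om : region) : Prop :=
  open3 Om /\
  (exists x0 x1 x2, Om x0 x1 x2) /\
  (forall U V : region, open3 U -> open3 V ->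
     (forall x0 x1 x2, Om x0 x1 x2 -> U x0 x1 x2 \/ V x0 x1 x2) ->
     (forall x0 x1 x2, Om x0 x1 x2 -> U x0 x1 x2 -> V x0 x1 x2 -> False) ->
     (exists x0 x1 x2, Om x0 x1 x2 /\ U x0 x1 x2) ->
     (exists x0 x1 x2, Om x0 x1 x2 /\ V x0 x1 x2) -> False).

Definition hpd (i : idx) (f : hfun) : hfun :=
  fun x0 x1 x2 =>
    mkQ (pd i (fun a b c => q0 (f a b c)) x0 x1 x2)
        (pd i (fun a b c => q1 (f a b c)) x0 x1 x2)
        (pd i (fun a b c => q2 (f a b c)) x0 x1 x2)
        (pd i (fun a b c => q3 (f a b c)) x0 x1 x2).

Definition dbarL (f : hfun) : hfun := fun x0 x1 x2 =>
  qadd (qadd (hpd I0 f x0 x1 x2) (qmul e1 (hpd I1 f x0 x1 x2)))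
       (qmul e2 (hpd I2 f x0 x1 x2)).
Definition dL (f : hfun) : hfun := fun x0 x1 x2 =>
  qsub (qsub (hpd I0 f x0 x1 x2) (qmul e1 (hpd I1 f x0 x1 x2)))
       (qmul e2 (hpd I2 f x0 x1 x2)).
Definition dbarR (f : hfun) : hfun := fun x0 x1 x2 =>
  qadd (qadd (hpd I0 f x0 x1 x2) (qmul (hpd I1 f x0 x1 x2) e1))
       (qmul (hpd I2 f x0 x1 x2) e2).
Definition dR (f : hfun) : hfun := fun x0 x1 x2 =>
  qsub (qsub (hpd I0 f x0 x1 x2) (qmul (hpd I1 f x0 x1 x2) e1))
       (qmul (hpd I2 f x0 x1 x2) e2).

Definition dbar2 (f : hfun) : hfun := dbarL (dbarR f).
Definition dd2 (f : hfun) : hfun := dL (dR f).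

Definition inframonogenic (Om : region) (f : hfun) : Prop :=
  forall x0 x1 x2, Om x0 x1 x2 -> dbar2 f x0 x1 x2 = qzero.
Definition antiinframonogenic (Om : region) (f : hfun) : Prop :=
  forall x0 x1 x2, Om x0 x1 x2 -> dd2 f x0 x1 x2 = qzero.

Definition lap3 (g : rfun) : rfun := fun x0 x1 x2 =>
  pd I0 (pd I0 g) x0 x1 x2 + pd I1 (pd I1 g) x0 x1 x2 + pd I2 (pd I2 g) x0 x1 x2.
Definition biharmonic (Om : region) (g : rfun) : Prop :=
  forall x0 x1 x2, Om x0 x1 x2 -> lap3 (lap3 g) x0 x1 x2 = 0.

Definition hreal (b : rfun) : hfun := fun x0 x1 x2 => qreal (b x0 x1 x2).
Definition hvec (f0 f1 f2 : rfun) : hfun := fun x0 x1 x2 =>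
  mkQ (f0 x0 x1 x2) (f1 x0 x1 x2) (f2 x0 x1 x2) 0.

(* Main.v *)
Require Import Defs.
From Stdlib Require Import Reals Lra Lia List Permutation.
From Coquelicot Require Import Coquelicot.
Open Scope R_scope.

Definition term := (R * rfun * list idx)%type.

Fixpoint ev (T : list term) (x0 x1 x2 : R) : R :=
  match T with
  | nil => 0
  | (c, g, l) :: T' => c * pds l g x0 x1 x2 + ev T' x0 x1 x2
  end.

Definition good (Om : region) (n : nat) (T : list term) : Prop :=
  List.Forall (fun t => match t with (c, g, l) => Ck 4 Om g /\ (length l <= n)%nat end) T.

Definition Dt (i : idx) (T : list term) : list term :=
  map (fun t => match t with (c, g, l) => (c, g, i :: l) end) T.
Definition sc (k : R) (T : list term) : list term :=
  map (fun t => match t with (c, g, l) => (k * c, g, l) end) T.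

Definition repR (Om : region) (g : rfun) (T : list term) : Prop :=
  forall x0 x1 x2, Om x0 x1 x2 -> g x0 x1 x2 = ev T x0 x1 x2.

Lemma ev_app T U x0 x1 x2 : ev (T ++ U) x0 x1 x2 = ev T x0 x1 x2 + ev U x0 x1 x2.
Proof. induction T as [|[[c g] l] T IH]; simpl; [lra|rewrite IH; lra]. Qed.

Lemma ev_sc k T x0 x1 x2 : ev (sc k T) x0 x1 x2 = k * ev T x0 x1 x2.
Proof. induction T as [|[[c g] l] T IH]; simpl; [lra|rewrite IH; lra]. Qed.

Lemma good_app Om n T U : good Om n T -> good Om n U -> good Om n (T ++ U).
Proof. intros; apply List.Forall_app; auto. Qed.

Lemma good_sc Om n k T : good Om n T -> good Om n (sc k T).
Proof.
  induction 1 as [|[[c g] l] T H1 H2 IH]; simpl; constructor; auto.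
Qed.

Lemma good_Dt Om n i T : good Om n T -> good Om (S n) (Dt i T).
Proof.
  induction 1 as [|[[c g] l] T H1 H2 IH]; simpl; constructor; auto.
  destruct H1; split; simpl; auto; lia.
Qed.

Lemma good_mono Om n m T : (n <= m)%nat -> good Om n T -> good Om m T.
Proof.
  intros Hnm; induction 1 as [|[[c g] l] T H1 H2 IH]; constructor; auto.
  destruct H1; split; auto; lia.
Qed.

Lemma near3 Om x0 x1 x2 : open3 Om -> Om x0 x1 x2 ->
  exists d : posreal, forall u v w, Rabs (u - x0) < d -> Rabs (v - x1) < d ->
    Rabs (w - x2) < d -> Om u v w.
Proof.
  intros Ho Hx. destruct (Ho _ _ _ Hx) as [r [Hr H]].
  assert (Hr2 : 0 < r / 2) by lra.
  exists (mkposreal _ Hr2). simpl. intros u v w Hu Hv Hw. apply H.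
  rewrite <- (pow2_abs (u - x0)), <- (pow2_abs (v - x1)), <- (pow2_abs (w - x2)).
  pose proof (Rabs_pos (u - x0)). pose proof (Rabs_pos (v - x1)).
  pose proof (Rabs_pos (w - x2)). nra.
Qed.

Lemma pd_loc Om i (u v : rfun) x0 x1 x2 : open3 Om ->
  (forall a b c, Om a b c -> u a b c = v a b c) -> Om x0 x1 x2 ->
  pd i u x0 x1 x2 = pd i v x0 x1 x2.
Proof.
  intros Ho Heq Hx. destruct (near3 Om x0 x1 x2 Ho Hx) as [d Hd].
  destruct i; simpl; apply Derive_ext_loc; exists d; intros y Hy;
    apply Heq; apply Hd; try exact Hy; rewrite Rminus_diag, Rabs_R0; apply cond_pos.
Qed.

Lemma Ck_ex Om g l i x0 x1 x2 : Ck 4 Om g -> (length l < 4)%nat -> Om x0 x1 x2 ->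
  ex_pd i (pds l g) x0 x1 x2.
Proof. intros H Hl Hx. apply (proj2 (H l ltac:(lia)) Hl i _ _ _ Hx). Qed.

Lemma Ck_cont Om g l x0 x1 x2 : Ck 4 Om g -> (length l <= 4)%nat -> Om x0 x1 x2 ->
  cont3 (pds l g) x0 x1 x2.
Proof. intros H Hl Hx. apply (proj1 (H l Hl) _ _ _ Hx). Qed.

Lemma ex_plus (f g : R -> R) x : ex_derive f x -> ex_derive g x -> ex_derive (fun t => f t + g t) x.
Proof. intros; apply (ex_derive_plus f g x); auto. Qed.
Lemma Dplus_eq (f g : R -> R) x a b : ex_derive f x -> ex_derive g x -> Derive f x = a -> Derive g x = b ->
  Derive (fun t => f t + g t) x = a + b.
Proof. intros; rewrite Derive_plus; auto; congruence. Qed.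

Lemma pd_ev Om i T x0 x1 x2 : good Om 3 T -> Om x0 x1 x2 ->
  ex_pd i (ev T) x0 x1 x2 /\ pd i (ev T) x0 x1 x2 = ev (Dt i T) x0 x1 x2.
Proof.
  intros HT Hx. induction HT as [|[[c g] l] T [Hg Hl] _ [IH1 IH2]].
  - destruct i; simpl; split;
      try (apply ex_derive_const); try (apply Derive_const).
  - pose proof (Ck_ex Om g l i x0 x1 x2 Hg ltac:(lia) Hx) as He.
    destruct i; simpl in *; split.
    all: first [ apply ex_plus; [apply ex_derive_scal; exact He| exact IH1]
               | apply Dplus_eq; [apply ex_derive_scal; exact He | exact IH1 | apply Derive_scal | exact IH2]].
Qed.

Lemma repR_pd Om g T i : open3 Om -> repR Om g T -> good Om 3 T ->
  repR Om (pd i g) (Dt i T).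
Proof.
  intros Ho Hr Hg x0 x1 x2 Hx.
  rewrite (pd_loc Om i g (ev T) x0 x1 x2 Ho Hr Hx).
  apply (pd_ev Om i T x0 x1 x2 Hg Hx).
Qed.

Lemma cont_2d (h : rfun) x0 x1 x2 :
  cont3 h x0 x1 x2 ->
  continuity_2d_pt (fun u v => h u v x2) x0 x1 /\
  continuity_2d_pt (fun u v => h u x1 v) x0 x2 /\
  continuity_2d_pt (fun u v => h x0 u v) x1 x2.
Proof.
  intros H. repeat split; intros eps; destruct (H eps (cond_pos eps)) as [d [Hd Hh]];
  exists (mkposreal d Hd); simpl; intros u v Hu Hv; apply Hh; auto;
  rewrite Rminus_diag, Rabs_R0; lra.
Qed.

Lemma swap_pd Om g l i j x0 x1 x2 : open3 Om -> Ck 4 Om g -> (length l <= 2)%nat ->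
  Om x0 x1 x2 ->
  pd i (pd j (pds l g)) x0 x1 x2 = pd j (pd i (pds l g)) x0 x1 x2.
Proof.
  intros Ho Hg Hl Hx.
  destruct (near3 Om x0 x1 x2 Ho Hx) as [d Hd].
  assert (Hd0 : 0 < d) by apply cond_pos.
  assert (Z : forall y, Rabs (y - y) < d) by (intros; rewrite Rminus_diag, Rabs_R0; lra).
  assert (E : forall k l', (length l' < 4)%nat -> forall a b c, Om a b c -> ex_pd k (pds l' g) a b c)
    by (intros; apply Ck_ex with (Om := Om); auto).
  assert (C : forall l', (length l' <= 4)%nat -> cont3 (pds l' g) x0 x1 x2)
    by (intros; apply Ck_cont with (Om := Om); auto).
  assert (S01 : pd I0 (pd I1 (pds l g)) x0 x1 x2 = pd I1 (pd I0 (pds l g)) x0 x1 x2).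
  { simpl. apply (Schwarz (fun u v => pds l g u v x2)).
    - exists d; intros u v Hu Hv. pose proof (Hd u v x2 Hu Hv (Z _)) as Hom.
      repeat split.
      + apply (E I0 l); [simpl; lia | assumption].
      + apply (E I1 l); [simpl; lia | assumption].
      + apply (E I0 (I1 :: l)); [simpl; lia | assumption].
      + apply (E I1 (I0 :: l)); [simpl; lia | assumption].
    - exact (proj1 (cont_2d _ _ _ _ (C (I0 :: I1 :: l) ltac:(simpl; lia)))).
    - exact (proj1 (cont_2d _ _ _ _ (C (I1 :: I0 :: l) ltac:(simpl; lia)))). }
  assert (S02 : pd I0 (pd I2 (pds l g)) x0 x1 x2 = pd I2 (pd I0 (pds l g)) x0 x1 x2).
  { simpl. apply (Schwarz (fun u v => pds l g u x1 v)).
    - exists d; intros u v Hu Hv. pose proof (Hd u x1 v Hu (Z _) Hv) as Hom.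
      repeat split.
      + apply (E I0 l); [simpl; lia | assumption].
      + apply (E I2 l); [simpl; lia | assumption].
      + apply (E I0 (I2 :: l)); [simpl; lia | assumption].
      + apply (E I2 (I0 :: l)); [simpl; lia | assumption].
    - exact (proj1 (proj2 (cont_2d _ _ _ _ (C (I0 :: I2 :: l) ltac:(simpl; lia))))).
    - exact (proj1 (proj2 (cont_2d _ _ _ _ (C (I2 :: I0 :: l) ltac:(simpl; lia))))). }
  assert (S12 : pd I1 (pd I2 (pds l g)) x0 x1 x2 = pd I2 (pd I1 (pds l g)) x0 x1 x2).
  { simpl. apply (Schwarz (fun u v => pds l g x0 u v)).
    - exists d; intros u v Hu Hv. pose proof (Hd x0 u v (Z _) Hu Hv) as Hom.
      repeat split.
      + apply (E I1 l); [simpl; lia | assumption].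
      + apply (E I2 l); [simpl; lia | assumption].
      + apply (E I1 (I2 :: l)); [simpl; lia | assumption].
      + apply (E I2 (I1 :: l)); [simpl; lia | assumption].
    - exact (proj2 (proj2 (cont_2d _ _ _ _ (C (I1 :: I2 :: l) ltac:(simpl; lia))))).
    - exact (proj2 (proj2 (cont_2d _ _ _ _ (C (I2 :: I1 :: l) ltac:(simpl; lia))))). }
  destruct i, j; try reflexivity; try assumption; symmetry; assumption.
Qed.

Lemma pds_perm Om g : open3 Om -> Ck 4 Om g -> forall l l', Permutation l l' ->
  (length l <= 4)%nat -> forall x0 x1 x2, Om x0 x1 x2 -> pds l g x0 x1 x2 = pds l' g x0 x1 x2.
Proof.
  intros Ho Hg l l' P. induction P as [|a l l' P IH|a b l|l l' l'' P1 IH1 P2 IH2];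
    intros Hl x0 x1 x2 Hx.
  - reflexivity.
  - simpl in Hl |- *. apply (pd_loc Om a _ _ x0 x1 x2 Ho); [|exact Hx].
    intros a0 b0 c0 H0; apply IH; [lia|exact H0].
  - simpl in Hl |- *. apply (swap_pd Om g l b a x0 x1 x2 Ho Hg); [lia|exact Hx].
  - rewrite (IH1 Hl x0 x1 x2 Hx). apply IH2; [|exact Hx].
    rewrite <- (Permutation_length P1); exact Hl.
Qed.

Definition inum (i : idx) : nat := match i with I0 => 0 | I1 => 1 | I2 => 2 end.
Fixpoint insert (a : idx) (l : list idx) : list idx :=
  match l with
  | nil => a :: nil
  | b :: l' => if Nat.leb (inum a) (inum b) then a :: l else b :: insert a l'
  end.
Fixpoint isort (l : list idx) : list idx :=
  match l with nil => nil | a :: l' => insert a (isort l') end.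

Lemma insert_perm a l : Permutation (a :: l) (insert a l).
Proof.
  induction l as [|b l IH]; simpl; auto.
  destruct (Nat.leb (inum a) (inum b)); auto.
  eapply perm_trans; [apply perm_swap|]. constructor; auto.
Qed.

Lemma isort_perm l : Permutation l (isort l).
Proof.
  induction l as [|a l IH]; simpl; auto.
  eapply perm_trans; [constructor; exact IH|apply insert_perm].
Qed.

Definition canon (T : list term) : list term :=
  map (fun t => match t with (c, g, l) => (c, g, isort l) end) T.

Lemma ev_canon Om T x0 x1 x2 : open3 Om -> good Om 4 T -> Om x0 x1 x2 ->
  ev T x0 x1 x2 = ev (canon T) x0 x1 x2.
Proof.
  intros Ho HT Hx. induction HT as [|[[c g] l] T [Hg Hl] _ IH]; simpl; auto.
  rewrite IH. f_equal. f_equal. apply (pds_perm Om g Ho Hg); [apply isort_perm|exact Hl|exact Hx].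
Qed.

Definition T4 := (list term * list term * list term * list term)%type.

Definition repH (Om : region) (F : hfun) (X : T4) : Prop :=
  let '(A, B, C, D) := X in
  repR Om (fun a b c => q0 (F a b c)) A /\ repR Om (fun a b c => q1 (F a b c)) B /\
  repR Om (fun a b c => q2 (F a b c)) C /\ repR Om (fun a b c => q3 (F a b c)) D.

Definition goodH Om n (X : T4) : Prop :=
  let '(A, B, C, D) := X in good Om n A /\ good Om n B /\ good Om n C /\ good Om n D.

Definition m1 := sc (-1).

Definition TdR (X : T4) : T4 := let '(A, B, C, D) := X in
  (Dt I0 A ++ Dt I1 B ++ Dt I2 C,
   Dt I0 B ++ m1 (Dt I1 A) ++ Dt I2 D,
   Dt I0 C ++ m1 (Dt I1 D) ++ m1 (Dt I2 A),
   Dt I0 D ++ Dt I1 C ++ m1 (Dt I2 B)).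
Definition TdbarR (X : T4) : T4 := let '(A, B, C, D) := X in
  (Dt I0 A ++ m1 (Dt I1 B) ++ m1 (Dt I2 C),
   Dt I0 B ++ Dt I1 A ++ m1 (Dt I2 D),
   Dt I0 C ++ Dt I1 D ++ Dt I2 A,
   Dt I0 D ++ m1 (Dt I1 C) ++ Dt I2 B).
Definition TdbarL (X : T4) : T4 := let '(A, B, C, D) := X in
  (Dt I0 A ++ m1 (Dt I1 B) ++ m1 (Dt I2 C),
   Dt I0 B ++ Dt I1 A ++ Dt I2 D,
   Dt I0 C ++ m1 (Dt I1 D) ++ Dt I2 A,
   Dt I0 D ++ Dt I1 C ++ m1 (Dt I2 B)).
Definition TdL (X : T4) : T4 := let '(A, B, C, D) := X in
  (Dt I0 A ++ Dt I1 B ++ Dt I2 C,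
   Dt I0 B ++ m1 (Dt I1 A) ++ m1 (Dt I2 D),
   Dt I0 C ++ Dt I1 D ++ m1 (Dt I2 A),
   Dt I0 D ++ m1 (Dt I1 C) ++ Dt I2 B).

Ltac good_tac :=
  repeat (apply good_app || apply good_sc || unfold m1); apply good_Dt; assumption.

Ltac rep_tac Ho :=
  intros x0 x1 x2 Hx;
  cbn [q0 q1 q2 q3 qadd qsub qopp qmul e1 e2 e3 hpd dR dL dbarR dbarL TdR TdL TdbarR TdbarL];
  repeat rewrite ev_app; unfold m1; repeat rewrite ev_sc;
  repeat match goal with
  | H : repR _ ?g ?T, HG : good _ _ ?T |- context [pd ?i ?g x0 x1 x2] =>
      rewrite (repR_pd _ g T i Ho H HG x0 x1 x2 Hx)
  end; lra.

Lemma goodH_TdR Om n X : goodH Om n X -> goodH Om (S n) (TdR X).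
Proof. destruct X as [[[A B] C] D]; intros [? [? [? ?]]]; repeat split; good_tac. Qed.
Lemma goodH_TdbarR Om n X : goodH Om n X -> goodH Om (S n) (TdbarR X).
Proof. destruct X as [[[A B] C] D]; intros [? [? [? ?]]]; repeat split; good_tac. Qed.
Lemma goodH_TdL Om n X : goodH Om n X -> goodH Om (S n) (TdL X).
Proof. destruct X as [[[A B] C] D]; intros [? [? [? ?]]]; repeat split; good_tac. Qed.
Lemma goodH_TdbarL Om n X : goodH Om n X -> goodH Om (S n) (TdbarL X).
Proof. destruct X as [[[A B] C] D]; intros [? [? [? ?]]]; repeat split; good_tac. Qed.

Lemma repH_dR Om F X : open3 Om -> repH Om F X -> goodH Om 3 X -> repH Om (dR F) (TdR X).
Proof.
  destruct X as [[[A B] C] D]; intros Ho [? [? [? ?]]] [? [? [? ?]]].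
  repeat split; rep_tac Ho.
Qed.
Lemma repH_dbarR Om F X : open3 Om -> repH Om F X -> goodH Om 3 X -> repH Om (dbarR F) (TdbarR X).
Proof.
  destruct X as [[[A B] C] D]; intros Ho [? [? [? ?]]] [? [? [? ?]]].
  repeat split; rep_tac Ho.
Qed.
Lemma repH_dL Om F X : open3 Om -> repH Om F X -> goodH Om 3 X -> repH Om (dL F) (TdL X).
Proof.
  destruct X as [[[A B] C] D]; intros Ho [? [? [? ?]]] [? [? [? ?]]].
  repeat split; rep_tac Ho.
Qed.
Lemma repH_dbarL Om F X : open3 Om -> repH Om F X -> goodH Om 3 X -> repH Om (dbarL F) (TdbarL X).
Proof.
  destruct X as [[[A B] C] D]; intros Ho [? [? [? ?]]] [? [? [? ?]]].
  repeat split; rep_tac Ho.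
Qed.

Definition hrealT (b : rfun) : T4 := ((1, b, nil) :: nil, nil, nil, nil).
Definition hvecT (f0 f1 f2 : rfun) : T4 :=
  ((1, f0, nil) :: nil, (1, f1, nil) :: nil, (1, f2, nil) :: nil, nil).
Definition T4nil : T4 := (nil, nil, nil, nil).

Lemma repH_hreal Om b : repH Om (hreal b) (hrealT b).
Proof. repeat split; intros x0 x1 x2 Hx; simpl; ring. Qed.
Lemma goodH_hreal Om b : Ck 4 Om b -> goodH Om 0 (hrealT b).
Proof. intros H; repeat split; repeat (apply Forall_cons || apply Forall_nil); simpl; auto. Qed.
Lemma repH_hvec Om f0 f1 f2 : repH Om (hvec f0 f1 f2) (hvecT f0 f1 f2).
Proof. repeat split; intros x0 x1 x2 Hx; simpl; ring. Qed.
Lemma goodH_hvec Om f0 f1 f2 : Ck 4 Om f0 -> Ck 4 Om f1 -> Ck 4 Om f2 -> goodH Om 0 (hvecT f0 f1 f2).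
Proof. intros H0 H1 H2; repeat split; repeat (apply Forall_cons || apply Forall_nil); simpl; auto. Qed.
Lemma goodH_nil Om n : goodH Om n T4nil.
Proof. repeat split; constructor. Qed.

Definition lapT0 (g : rfun) : list term :=
  (1, g, I0 :: I0 :: nil) :: (1, g, I1 :: I1 :: nil) :: (1, g, I2 :: I2 :: nil) :: nil.
Definition lapT (g : rfun) : list term :=
  Dt I0 (Dt I0 (lapT0 g)) ++ Dt I1 (Dt I1 (lapT0 g)) ++ Dt I2 (Dt I2 (lapT0 g)).

Lemma lap_rep Om g : open3 Om -> Ck 4 Om g -> repR Om (lap3 (lap3 g)) (lapT g).
Proof.
  intros Ho Hg.
  assert (R0 : repR Om (lap3 g) (lapT0 g)) by (intros x0 x1 x2 Hx; unfold lap3, lapT0; simpl; ring).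
  assert (G0 : good Om 2 (lapT0 g)) by (repeat (apply Forall_cons || apply Forall_nil); simpl; auto).
  assert (G1 : forall i, good Om 3 (Dt i (lapT0 g))) by (intros; apply good_Dt; auto).
  assert (G0' : good Om 3 (lapT0 g)) by (apply (good_mono Om 2); auto).
  intros x0 x1 x2 Hx. unfold lap3 at 1. unfold lapT. rewrite !ev_app.
  rewrite (repR_pd Om _ _ I0 Ho (repR_pd Om _ _ I0 Ho R0 G0') (G1 I0) x0 x1 x2 Hx).
  rewrite (repR_pd Om _ _ I1 Ho (repR_pd Om _ _ I1 Ho R0 G0') (G1 I1) x0 x1 x2 Hx).
  rewrite (repR_pd Om _ _ I2 Ho (repR_pd Om _ _ I2 Ho R0 G0') (G1 I2) x0 x1 x2 Hx).
  ring.
Qed.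

Lemma good_lapT Om g : Ck 4 Om g -> good Om 4 (lapT g).
Proof. intros; unfold lapT, lapT0; repeat (apply good_app || apply good_Dt); repeat (apply Forall_cons || apply Forall_nil); simpl; auto. Qed.

Lemma goodH_3 Om n X : goodH Om n X -> (n <= 3)%nat -> goodH Om 3 X.
Proof. destruct X as [[[A B] C] D]; intros [? [? [? ?]]] Hn; repeat split; apply (good_mono Om n); auto. Qed.

Lemma quat_zero q : q0 q = 0 -> q1 q = 0 -> q2 q = 0 -> q3 q = 0 -> q = qzero.
Proof. destruct q; simpl; intros; subst; reflexivity. Qed.

Ltac compute_ev := cbn [ev canon isort insert inum Nat.leb map app Dt sc m1 fst snd
  TdR TdL TdbarR TdbarL hrealT hvecT T4nil lapT lapT0].
Ltac compute_ev_in H := cbn [ev canon isort insert inum Nat.leb map app Dt sc m1 fst snd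
  TdR TdL TdbarR TdbarL hrealT hvecT T4nil lapT lapT0] in H.

Theorem proposition2p2 (Om : region) (HOm : domain3 Om) :
  (forall b : rfun, Ck 4 Om b -> biharmonic Om b ->
     inframonogenic Om (dd2 (hreal b)) /\
     antiinframonogenic Om (dbar2 (hreal b))) /\
  (forall f0 f1 f2 : rfun, Ck 4 Om f0 -> Ck 4 Om f1 -> Ck 4 Om f2 ->
     (inframonogenic Om (hvec f0 f1 f2) \/ antiinframonogenic Om (hvec f0 f1 f2)) ->
     biharmonic Om f0 /\ biharmonic Om f1 /\ biharmonic Om f2).
Proof.
  destruct HOm as [Ho _].
  split.
  - intros b Hb Hbi.
    pose proof (goodH_hreal Om b Hb) as G0.
    pose proof (goodH_TdR _ _ _ G0) as G1.
    pose proof (goodH_TdL _ _ _ G1) as G2.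
    pose proof (goodH_TdbarR _ _ _ G0) as G1'.
    pose proof (goodH_TdbarL _ _ _ G1') as G2c.
    pose proof (repH_dR Om _ _ Ho (repH_hreal Om b) (goodH_3 _ _ _ G0 ltac:(lia))) as R1.
    pose proof (repH_dbarR Om _ _ Ho (repH_hreal Om b) (goodH_3 _ _ _ G0 ltac:(lia))) as R1'.
    pose proof (repH_dL Om _ _ Ho R1 (goodH_3 _ _ _ G1 ltac:(lia))) as R2.
    pose proof (repH_dbarL Om _ _ Ho R1' (goodH_3 _ _ _ G1' ltac:(lia))) as R2'.
    pose proof (goodH_TdbarR _ _ _ G2) as G3.
    pose proof (goodH_TdbarL _ _ _ G3) as G4.
    pose proof (goodH_TdR _ _ _ G2c) as G3'.
    pose proof (goodH_TdL _ _ _ G3') as G4'.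
    pose proof (repH_dbarR Om _ _ Ho R2 (goodH_3 _ _ _ G2 ltac:(lia))) as R3.
    pose proof (repH_dbarL Om _ _ Ho R3 (goodH_3 _ _ _ G3 ltac:(lia))) as R4.
    pose proof (repH_dR Om _ _ Ho R2' (goodH_3 _ _ _ G2c ltac:(lia))) as R3'.
    pose proof (repH_dL Om _ _ Ho R3' (goodH_3 _ _ _ G3' ltac:(lia))) as R4'.
    split; intros x0 x1 x2 Hx.
    + pose proof (Hbi x0 x1 x2 Hx) as E.
      rewrite (lap_rep Om b Ho Hb x0 x1 x2 Hx), (ev_canon Om _ x0 x1 x2 Ho (good_lapT Om b Hb) Hx) in E.
      destruct R4 as [Q0 [Q1 [Q2 Q3]]]. destruct G4 as [K0 [K1 [K2 K3]]].
      unfold dbar2, dd2; apply quat_zero;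
        [ rewrite (Q0 x0 x1 x2 Hx), (ev_canon Om _ x0 x1 x2 Ho K0 Hx)
        | rewrite (Q1 x0 x1 x2 Hx), (ev_canon Om _ x0 x1 x2 Ho K1 Hx)
        | rewrite (Q2 x0 x1 x2 Hx), (ev_canon Om _ x0 x1 x2 Ho K2 Hx)
        | rewrite (Q3 x0 x1 x2 Hx), (ev_canon Om _ x0 x1 x2 Ho K3 Hx) ];
        compute_ev; compute_ev; compute_ev_in E; lra.
    + pose proof (Hbi x0 x1 x2 Hx) as E.
      rewrite (lap_rep Om b Ho Hb x0 x1 x2 Hx), (ev_canon Om _ x0 x1 x2 Ho (good_lapT Om b Hb) Hx) in E.
      destruct R4' as [Q0 [Q1 [Q2 Q3]]]. destruct G4' as [K0 [K1 [K2 K3]]].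
      unfold dbar2, dd2; apply quat_zero;
        [ rewrite (Q0 x0 x1 x2 Hx), (ev_canon Om _ x0 x1 x2 Ho K0 Hx)
        | rewrite (Q1 x0 x1 x2 Hx), (ev_canon Om _ x0 x1 x2 Ho K1 Hx)
        | rewrite (Q2 x0 x1 x2 Hx), (ev_canon Om _ x0 x1 x2 Ho K2 Hx)
        | rewrite (Q3 x0 x1 x2 Hx), (ev_canon Om _ x0 x1 x2 Ho K3 Hx) ];
        compute_ev; compute_ev; compute_ev_in E; lra.
  - intros f0 f1 f2 H0 H1 H2 Hor.
    pose proof (goodH_hvec Om f0 f1 f2 H0 H1 H2) as G0.
    assert (KEY : forall Z Z0 F, goodH Om 4 Z -> repH Om F Z -> repH Om F Z0 ->
      forall x0 x1 x2, Om x0 x1 x2 ->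
      ev (canon (fst (fst (fst Z)))) x0 x1 x2 = ev (fst (fst (fst Z0))) x0 x1 x2 /\
      ev (canon (snd (fst (fst Z)))) x0 x1 x2 = ev (snd (fst (fst Z0))) x0 x1 x2 /\
      ev (canon (snd (fst Z))) x0 x1 x2 = ev (snd (fst Z0)) x0 x1 x2 /\
      ev (canon (snd Z)) x0 x1 x2 = ev (snd Z0) x0 x1 x2).
    { intros [[[A B] C] D] [[[A' B'] C'] D'] F [K0 [K1 [K2 K3]]] [Q0 [Q1 [Q2 Q3]]] [P0 [P1 [P2 P3]]] x0 x1 x2 Hx.
      simpl. rewrite <- !(ev_canon Om _ x0 x1 x2 Ho) by assumption.
      rewrite <- (Q0 _ _ _ Hx), <- (Q1 _ _ _ Hx), <- (Q2 _ _ _ Hx), <- (Q3 _ _ _ Hx),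
        <- (P0 _ _ _ Hx), <- (P1 _ _ _ Hx), <- (P2 _ _ _ Hx), <- (P3 _ _ _ Hx).
      auto. }
    assert (LAP : forall g, Ck 4 Om g -> forall x0 x1 x2, Om x0 x1 x2 ->
      lap3 (lap3 g) x0 x1 x2 = ev (canon (lapT g)) x0 x1 x2).
    { intros g Hg x0 x1 x2 Hx. rewrite (lap_rep Om g Ho Hg x0 x1 x2 Hx).
      apply (ev_canon Om _ x0 x1 x2 Ho (good_lapT Om g Hg) Hx). }
    destruct Hor as [Hinf|Hanti].
    + pose proof (goodH_TdbarR _ _ _ G0) as G1.
      pose proof (goodH_TdbarL _ _ _ G1) as G2.
      pose proof (goodH_TdR _ _ _ G2) as G3.
      pose proof (goodH_TdL _ _ _ G3) as G4.
      pose proof (repH_dbarR Om _ _ Ho (repH_hvec Om f0 f1 f2) (goodH_3 _ _ _ G0 ltac:(lia))) as R1.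
      pose proof (repH_dbarL Om _ _ Ho R1 (goodH_3 _ _ _ G1 ltac:(lia))) as R2.
      pose proof (repH_dR Om (dbar2 (hvec f0 f1 f2)) _ Ho R2 (goodH_3 _ _ _ G2 ltac:(lia))) as R3.
      pose proof (repH_dL Om _ _ Ho R3 (goodH_3 _ _ _ G3 ltac:(lia))) as R4.
      assert (S2 : repH Om (dbar2 (hvec f0 f1 f2)) T4nil).
      { repeat split; intros x0 x1 x2 Hx; rewrite (Hinf x0 x1 x2 Hx); reflexivity. }
      pose proof (repH_dR Om _ _ Ho S2 (goodH_nil Om 3)) as S3.
      pose proof (repH_dL Om _ _ Ho S3 (goodH_nil Om 3)) as S4.
      repeat split; intros x0 x1 x2 Hx;
        destruct (KEY _ _ _ G4 R4 S4 x0 x1 x2 Hx) as [E0 [E1 [E2 E3]]];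
        match goal with |- lap3 (lap3 ?g) _ _ _ = _ =>
          let Hg := fresh in assert (Hg : Ck 4 Om g) by assumption;
          rewrite (LAP g Hg x0 x1 x2 Hx) end;
        compute_ev; compute_ev_in E0; compute_ev_in E1; compute_ev_in E2; compute_ev_in E3; lra.
    + pose proof (goodH_TdR _ _ _ G0) as G1.
      pose proof (goodH_TdL _ _ _ G1) as G2.
      pose proof (goodH_TdbarR _ _ _ G2) as G3.
      pose proof (goodH_TdbarL _ _ _ G3) as G4.
      pose proof (repH_dR Om _ _ Ho (repH_hvec Om f0 f1 f2) (goodH_3 _ _ _ G0 ltac:(lia))) as R1.
      pose proof (repH_dL Om _ _ Ho R1 (goodH_3 _ _ _ G1 ltac:(lia))) as R2.
      pose proof (repH_dbarR Om (dd2 (hvec f0 f1 f2)) _ Ho R2 (goodH_3 _ _ _ G2 ltac:(lia))) as R3.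
      pose proof (repH_dbarL Om _ _ Ho R3 (goodH_3 _ _ _ G3 ltac:(lia))) as R4.
      assert (S2 : repH Om (dd2 (hvec f0 f1 f2)) T4nil).
      { repeat split; intros x0 x1 x2 Hx; rewrite (Hanti x0 x1 x2 Hx); reflexivity. }
      pose proof (repH_dbarR Om _ _ Ho S2 (goodH_nil Om 3)) as S3.
      pose proof (repH_dbarL Om _ _ Ho S3 (goodH_nil Om 3)) as S4.
      repeat split; intros x0 x1 x2 Hx;
        destruct (KEY _ _ _ G4 R4 S4 x0 x1 x2 Hx) as [E0 [E1 [E2 E3]]];
        match goal with |- lap3 (lap3 ?g) _ _ _ = _ =>
          let Hg := fresh in assert (Hg : Ck 4 Om g) by assumption;
          rewrite (LAP g Hg x0 x1 x2 Hx) end;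
        compute_ev; compute_ev_in E0; compute_ev_in E1; compute_ev_in E2; compute_ev_in E3; lra.
Qed.
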